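(* Let $\rho_{AB}\in M_2(\mathbb{C})\otimes M_d(\mathbb{C})$ be a bipartite state, let $\{P_a\}_{a=0}^1$ be a nontrivial projective measurement on subsystem $A$ (i.e. $P_0,P_1$ are rank-one orthogonal projections on $\mathbb{C}^2$ with $P_0+P_1=\mathbb{1}$), and set $\rho_a=\mathrm{Tr}_A\big((P_a\otimes\mathbb{1})\rho_{AB}\big)$. Then: (i) if $\mathrm{rank}(\rho_0)=\mathrm{rank}(\rho_1)=1$, then $\mathrm{rank}(\rho_{AB})\ne3$; (ii) if $d\ge3$, $\mathrm{rank}(\rho_{AB})=3$ and $\mathrm{rank}(\rho_0)=0$, then $\mathrm{rank}(\rho_1)=3$; (iii) if $d=2$ and $\mathrm{rank}(\rho_{AB})=3$, then neither $\rho_0$ nor $\rho_1$ has rank zero. *)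

(* Defs.v *)
(* Complex numbers: an arbitrary numClosedFieldType C
   (the complex numbers are one; algC is another). *)
From HB Require Import structures.
From mathcomp Require Import all_boot all_order all_algebra.
From mathcomp Require Export mxtens.
Set Implicit Arguments. Unset Strict Implicit. Unset Printing Implicit Defensive.
Import Order.TTheory GRing.Theory Num.Theory.
Local Open Scope ring_scope.

Definition adjmx (C : numClosedFieldType) m n (A : 'M[C]_(m, n)) : 'M[C]_(n, m) :=
  (map_mx Num.conj A)^T.

Definition hermitian (C : numClosedFieldType) n (A : 'M[C]_n) : Prop :=
  adjmx A = A.

Definition psdmx (C : numClosedFieldType) n (A : 'M[C]_n) : Prop :=
  hermitian A /\ forall v : 'rV[C]_n, 0 <= (v *m A *m adjmx v) 0 0.

Definition is_state (C : numClosedFieldType) n (A : 'M[C]_n) : Prop :=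
  psdmx A /\ \tr A = 1.

Definition orth_proj (C : numClosedFieldType) n (P : 'M[C]_n) : Prop :=
  hermitian P /\ P *m P = P.

(* partial trace over the first tensor factor of C^m (x) C^d,
   with the Kronecker index convention of mxtens (A *t B) *)
Definition ptraceA (C : numClosedFieldType) m d (M : 'M[C]_(m * d)) : 'M[C]_d :=
  \matrix_(k, l) \sum_(i < m) M (mxtens_index (i, k)) (mxtens_index (i, l)).

Definition cond_state (C : numClosedFieldType) d (P : 'M[C]_2) (rho : 'M[C]_(2 * d))
  : 'M[C]_d := ptraceA ((P *t (1%:M : 'M[C]_d)) *m rho).

(* Main.v *)
Require Import Defs.
From HB Require Import structures.
From mathcomp Require Import all_boot all_order all_algebra.
From mathcomp Require Import mxtens.
From mathcomp Require Import ring zify.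
Import Order.TTheory GRing.Theory Num.Theory.
Local Open Scope ring_scope.
Set Implicit Arguments. Unset Strict Implicit. Unset Printing Implicit Defensive.

Section S.
Variable C : numClosedFieldType.

Lemma adjmxK m n (A : 'M[C]_(m, n)) : adjmx (adjmx A) = A.
Proof. by apply/matrixP => i j; rewrite !mxE conjCK. Qed.

Lemma adjmxM m n p (A : 'M[C]_(m, n)) (B : 'M[C]_(n, p)) :
  adjmx (A *m B) = adjmx B *m adjmx A.
Proof. by rewrite /adjmx map_mxM trmx_mul. Qed.

Lemma adjmxD m n (A B : 'M[C]_(m, n)) : adjmx (A + B) = adjmx A + adjmx B.
Proof. by apply/matrixP => i j; rewrite !mxE rmorphD. Qed.

Lemma adjmxZ m n a (A : 'M[C]_(m, n)) : adjmx (a *: A) = a^* *: adjmx A.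
Proof. by apply/matrixP => i j; rewrite !mxE rmorphM. Qed.

Lemma addE m n (A B : 'M[C]_(m, n)) i j : (A + B) i j = A i j + B i j.
Proof. by rewrite mxE. Qed.
Lemma scaleE m n c (A : 'M[C]_(m, n)) i j : (c *: A) i j = c * A i j.
Proof. by rewrite mxE. Qed.

Lemma adjmxE m n (A : 'M[C]_(m, n)) i j : adjmx A i j = (A j i)^*.
Proof. by rewrite !mxE. Qed.

Lemma psd_form_conj n (M : 'M[C]_n) (u w : 'rV[C]_n) : Defs.hermitian M ->
  (w *m M *m adjmx u) 0 0 = ((u *m M *m adjmx w) 0 0)^*.
Proof.
move=> hM.
have -> : ((u *m M *m adjmx w) 0 0)^* = (adjmx (u *m M *m adjmx w)) 0 0 by rewrite !mxE.
by rewrite !adjmxM adjmxK hM mulmxA.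
Qed.

Lemma psd_null n (M : 'M[C]_n) (f : 'rV[C]_n) : psdmx M ->
  (f *m M *m adjmx f) 0 0 = 0 -> f *m M = 0.
Proof.
move=> [hM pM] f0.
suff H : forall g : 'rV[C]_n, (g *m M *m adjmx f) 0 0 = 0.
  have H2 : M *m adjmx f = 0.
    apply/matrixP => j k; rewrite [k]ord1 [RHS]mxE.
    by have := H (delta_mx 0 j); rewrite -mulmxA -rowE mxE.
  by rewrite -[f *m M]adjmxK adjmxM hM H2; apply/matrixP => i j; rewrite !mxE conjC0.
move=> g.
set a := (g *m M *m adjmx f) 0 0.
set b := (g *m M *m adjmx g) 0 0.
have b0 : 0 <= b by apply: pM.
have cfg : (f *m M *m adjmx g) 0 0 = a^* by rewrite psd_form_conj.
have := pM ((b + 1) *: f + (- a^*) *: g).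
rewrite adjmxD !adjmxZ !mulmxDl !mulmxDr -!scalemxAl -!scalemxAr !addE !scaleE.
rewrite f0 cfg -/a -/b.
have e1 : (- a^*)^* = - a by rewrite rmorphN /= conjCK.
have e2 : (b + 1)^* = b + 1 by rewrite rmorphD /= rmorph1 (geC0_conj b0).
rewrite e1 e2.
have -> : (b + 1) * ((b + 1) * 0) + (b + 1) * (- a * a^*) +
   (- a^* * ((b + 1) * a) + - a^* * (- a * b)) = - ((a * a^*) * (b + 2)) by ring.
rewrite oppr_ge0 => le0.
have ge0 : 0 <= (a * a^*) * (b + 2).
  by rewrite mulr_ge0 // ?addr_ge0 // -normCK exprn_ge0.
have : a * a^* * (b + 2) == 0 by rewrite eq_le le0 ge0.
rewrite mulf_eq0 => /orP [|].
  by rewrite -normCK expf_eq0 /= normr_eq0 => /eqP.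
move=> /eqP b2; move: b0; rewrite (_ : b = -2) ?oppr_ge0 //.
  move=> h; have : (0:C) < 2 by rewrite ltr0n.
  by move=> h2; move: h; rewrite lt_geF.
by apply/eqP; rewrite -subr_eq0 opprK b2.
Qed.


Lemma psd_null_mx k n (M : 'M[C]_n) (G : 'M[C]_(k, n)) : psdmx M ->
  G *m M *m adjmx G = 0 -> G *m M = 0.
Proof.
move=> pM h; apply/row_matrixP => i; rewrite row_mul row0.
apply: psd_null => //.
have : (G *m M *m adjmx G) i i = 0 by rewrite h mxE.
move=> <-.
have -> : adjmx (row i G) = col i (adjmx G).
  by apply/matrixP => x y; rewrite !mxE.
by rewrite colE mulmxA -colE -!row_mul !mxE.
Qed.

Lemma rank_psd_sandwich k n (M : 'M[C]_n) (F : 'M[C]_(k, n)) : psdmx M ->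
  (\rank (F *m M) <= \rank (F *m M *m adjmx F))%N.
Proof.
move=> pM.
set K := kermx (F *m M *m adjmx F).
have h1 : K *m F *m M = 0.
  apply: psd_null_mx => //.
  have hK : K *m (F *m M *m adjmx F) = 0 by exact: mulmx_ker.
  have -> : K *m F *m M *m adjmx (K *m F) = K *m (F *m M *m adjmx F) *m adjmx K.
    by rewrite adjmxM !mulmxA.
  by rewrite hK mul0mx.
have h2 : (K <= kermx (F *m M))%MS by rewrite sub_kermx mulmxA h1.
have := mxrankS h2; rewrite !mxrank_ker.
have := rank_leq_row (F *m M *m adjmx F); have := rank_leq_row (F *m M).
move: (\rank (F *m M)) (\rank (F *m M *m adjmx F)) => x y; lia.
Qed.


Lemma det22 (A : 'M[C]_2) : \det A = A 0 0 * A 1 1 - A 0 1 * A 1 0.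
Proof.
rewrite (expand_det_row _ 0) big_ord_recl big_ord1 /cofactor !det_mx11 !mxE /=.
have -> : lift (0 : 'I_2) (0 : 'I_1) = 1 by apply/val_inj.
have -> : lift (1 : 'I_2) (0 : 'I_1) = 0 by apply/val_inj.
by rewrite /bump /= expr0 expr1 mul1r mulN1r mulrN.
Qed.

Lemma ord2_cases (i : 'I_2) : i = 0 \/ i = 1.
Proof. by case: i => [[|[|m]]] Hi; [left|right|]; try apply/val_inj. Qed.

Lemma proj_factor (P : 'M[C]_2) : orth_proj P -> \rank P = 1%N ->
  exists (x : 'rV[C]_2) (c : C), c != 0 /\ P = c *: (adjmx x *m x).
Proof.
move=> [hP iP] rP.
have herm k l : P k l = (P l k)^*.
  by rewrite -{1}hP /adjmx !mxE.
have idem i : P i i = \sum_j P i j * (P i j)^*.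
  rewrite -{1}iP mxE; apply: eq_bigr => j _; by rewrite -herm.
have hdet : P 0 0 * P 1 1 = P 0 1 * P 1 0.
  have : ~~ row_free P by rewrite /row_free rP.
  rewrite row_free_unit unitmxE unitfE negbK det22 subr_eq0 => /eqP //.
have rowz i : P i i = 0 -> forall j, P i j = 0.
  move=> h j; rewrite idem in h.
  have hF : forall l, xpredT l -> 0 <= P i l * (P i l)^*.
    by move=> l _; rewrite -normCK exprn_ge0.
  have := psumr_eq0P hF h (isT : xpredT j).
  by move/eqP; rewrite -normCK expf_eq0 /= normr_eq0 => /eqP.
have [i Pii] : exists i, P i i != 0.
  case: (boolP (P 0 0 == 0)) => [/eqP h0|h0]; last by exists 0.
  case: (boolP (P 1 1 == 0)) => [/eqP h1|h1]; last by exists 1.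
  have P0 : P = 0.
    apply/matrixP => k l; rewrite mxE.
    by case: (ord2_cases k) => ->; apply: rowz.
  by move: rP; rewrite P0 mxrank0.
exists (row i P), (P i i)^-1; split; first by rewrite invr_eq0.
apply/matrixP => k j; rewrite !mxE big_ord1 !mxE -herm.
have key : P k i * P i j = P i i * P k j.
  case: (ord2_cases i) => ->; case: (ord2_cases k) => ->; case: (ord2_cases j) => ->;
  by [rewrite mulrC | rewrite hdet mulrC | rewrite -hdet mulrC | rewrite mulrC hdet | rewrite mulrC -hdet].
by rewrite key mulrA mulVf // mul1r.
Qed.


Lemma sum_split m n (F : 'I_(m * n) -> C) :
  \sum_(j < m * n) F j = \sum_(i < m) \sum_(k < n) F (mxtens_index (i, k)).
Proof.
transitivity (\sum_(p : 'I_m * 'I_n) F (mxtens_index p)).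
  apply: (reindex (@mxtens_index m n)).
  by exists (@mxtens_unindex m n) => p _; rewrite (mxtens_indexK, mxtens_unindexK).
by rewrite pair_big; apply: eq_bigr => -[i k] _.
Qed.

Lemma sum_delta n (k : 'I_n) (a : C) (g : 'I_n -> C) :
  \sum_(k' < n) (a * (k == k')%:R) * g k' = a * g k.
Proof.
rewrite (bigD1 k) //= eqxx mulr1 big1 ?addr0 // => k' /negbTE.
by rewrite eq_sym => ->; rewrite mulr0 mul0r.
Qed.

Lemma sum_delta_r n (k : 'I_n) (a : C) (g : 'I_n -> C) :
  \sum_(k' < n) (a * (k' == k)%:R) * g k' = a * g k.
Proof.
by rewrite -(sum_delta k); apply: eq_bigr => k' _; rewrite eq_sym.
Qed.

Lemma sum_delta2 n (l : 'I_n) (a : C) (g : 'I_n -> C) :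
  \sum_(k' < n) g k' * (a * (k' == l)%:R) = g l * a.
Proof.
rewrite mulrC -(sum_delta_r l); apply: eq_bigr => k' _; by rewrite mulrC.
Qed.

Definition Emx d (x : 'rV[C]_2) : 'M[C]_(d, 2 * d) :=
  \matrix_(k, j) (x 0 (mxtens_unindex j).1 * ((mxtens_unindex j).2 == k)%:R).

Lemma EmxE d (x : 'rV[C]_2) k i k' :
  Emx d x k (mxtens_index (i, k')) = x 0 i * (k' == k)%:R.
Proof. by rewrite mxE mxtens_indexK. Qed.

Lemma cond_factor d (P : 'M[C]_2) (x : 'rV[C]_2) c (rho : 'M[C]_(2 * d)) :
  P = c *: (adjmx x *m x) ->
  cond_state P rho = c *: (Emx d x *m rho *m adjmx (Emx d x)).
Proof.
move=> ->; apply/matrixP => k l.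
rewrite /cond_state /ptraceA !mxE.
under eq_bigr => i _ do rewrite mxE sum_split.
under eq_bigr => i _ do under eq_bigr => i0 _ do under eq_bigr => k0 _ do
  rewrite tensmxE !mxE big_ord1 !mxE.
under eq_bigr => i _ do under eq_bigr => i0 _ do rewrite sum_delta.
rewrite sum_split mulr_sumr; apply: eq_bigr => i _.
under [in RHS]eq_bigr => k0 _ do rewrite adjmxE EmxE rmorphM rmorph_nat.
rewrite sum_delta2 mxE sum_split mulr_suml mulr_sumr; apply: eq_bigr => i0 _.
under eq_bigr => k' _ do rewrite EmxE.
rewrite sum_delta_r /=.
ring.
Qed.


Lemma EE_entry d (x : 'rV[C]_2) i k i' k' :
  (adjmx (Emx d x) *m Emx d x) (mxtens_index (i, k)) (mxtens_index (i', k'))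
  = (x 0 i)^* * x 0 i' * (k == k')%:R.
Proof.
rewrite mxE.
under eq_bigr => l _ do rewrite adjmxE !EmxE rmorphM rmorph_nat.
have -> : \sum_(l < d) ((x 0 i)^* * (k == l)%:R) * (x 0 i' * (k' == l)%:R)
   = \sum_(l < d) ((x 0 i)^* * x 0 i' * (k == l)%:R) * (k' == l)%:R.
  by apply: eq_bigr => l _; ring.
by rewrite sum_delta eq_sym.
Qed.

Lemma sum_EE d c0 c1 (x0 x1 : 'rV[C]_2) :
  c0 *: (adjmx x0 *m x0) + c1 *: (adjmx x1 *m x1) = 1%:M ->
  c0 *: (adjmx (Emx d x0) *m Emx d x0) + c1 *: (adjmx (Emx d x1) *m Emx d x1) = 1%:M.
Proof.
move=> h; apply/matrixP => p q.
case: (mxtens_indexP p) => i k; case: (mxtens_indexP q) => i' k'.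
have h2 := congr1 (fun M : 'M[C]_2 => M i i') h.
rewrite /= !mxE !big_ord1 !mxE in h2.
rewrite !addE !scaleE !EE_entry [1%:M _ _]mxE.
rewrite (inj_eq (can_inj (@mxtens_indexK 2 d))) xpair_eqE -mulnb natrM -h2 /=.
ring.
Qed.


End S.

Theorem lemma4 (C : numClosedFieldType) (d : nat)
  (rho : 'M[C]_(2 * d)) (P0 P1 : 'M[C]_2) :
  is_state rho ->
  orth_proj P0 -> orth_proj P1 ->
  \rank P0 = 1%N -> \rank P1 = 1%N -> P0 + P1 = 1%:M ->
  [/\ (\rank (cond_state P0 rho) = 1%N -> \rank (cond_state P1 rho) = 1%N ->
         \rank rho <> 3%N),
      (3 <= d)%N -> \rank rho = 3%N -> \rank (cond_state P0 rho) = 0%N ->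
         \rank (cond_state P1 rho) = 3%N
    & d = 2%N -> \rank rho = 3%N ->
         \rank (cond_state P0 rho) <> 0%N /\ \rank (cond_state P1 rho) <> 0%N].
Proof.
move=> [pR _] oP0 oP1 rP0 rP1 hsum.
have [x0 [c0 [c0n hP0]]] := proj_factor oP0 rP0.
have [x1 [c1 [c1n hP1]]] := proj_factor oP1 rP1.
have hE := @sum_EE C d c0 c1 x0 x1.
rewrite -hP0 -hP1 in hE; have {hE} hE := hE hsum.
set F0 := Emx d x0 in hE; set F1 := Emx d x1 in hE.
have e0 : \rank (cond_state P0 rho) = \rank (F0 *m rho *m adjmx F0).
  by rewrite (cond_factor rho hP0) mxrank_scale_nz.
have e1 : \rank (cond_state P1 rho) = \rank (F1 *m rho *m adjmx F1).
  by rewrite (cond_factor rho hP1) mxrank_scale_nz.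
have a0 := rank_psd_sandwich F0 pR.
have a1 := rank_psd_sandwich F1 pR.
have b0 := mxrankM_maxl (F0 *m rho) (adjmx F0).
have b1 := mxrankM_maxl (F1 *m rho) (adjmx F1).
have g0 := mxrankM_maxr F0 rho.
have g1 := mxrankM_maxr F1 rho.
have d0 := rank_leq_row (F0 *m rho *m adjmx F0).
have d1 := rank_leq_row (F1 *m rho *m adjmx F1).
have key : (\rank rho <= \rank (F0 *m rho) + \rank (F1 *m rho))%N.
  have hr : rho = c0 *: (adjmx F0 *m (F0 *m rho)) + c1 *: (adjmx F1 *m (F1 *m rho)).
    by rewrite !mulmxA (scalemxAl c0 (adjmx F0 *m F0)) (scalemxAl c1 (adjmx F1 *m F1)) -mulmxDl hE mul1mx.
  rewrite {1}hr.
  apply: leq_trans (mxrank_add _ _) _.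
  apply: leq_add; apply: leq_trans (mxrank_scale _ _) _; exact: mxrankM_maxr.
rewrite e0 e1.
move: e0 e1 a0 a1 b0 b1 g0 g1 d0 d1 key.
move: (\rank (F0 *m rho *m adjmx F0)) (\rank (F1 *m rho *m adjmx F1))
  (\rank (F0 *m rho)) (\rank (F1 *m rho)) (\rank rho) => r0 r1 s0 s1 R.
move=> _ _ *; split; try lia.
Qed.
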